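(* Let $m\ge0$ be an integer. Let $\varphi\in C^\infty(T\mathbb{S}^{n-1}\setminus\mathbb{S}^{n-1}_0)$ satisfy $$E_{m+1}E_m\cdots E_1\varphi=0$$ for all indices $1\le i_1,j_1,\dots,i_{m+1},j_{m+1}\le n$, where $$E_k=x_{i_k}\Xi_{j_k}-x_{j_k}\Xi_{i_k}+(m-k+1)\big(x_{i_k}\xi_{j_k}-x_{j_k}\xi_{i_k}\big)\quad(k=1,\dots,m+1)$$ (so $E_1$ is applied first and $E_{m+1}$ last). Define $\psi\in C^\infty(V_n)$ by $$\psi(x,\xi)=|\xi|^m\varphi\big(x,\xi/|\xi|\big).$$ Then, for all indices $1\le i_1,j_1,\dots,i_{m+1},j_{m+1}\le n$, $$\Big(x_{i_1}\frac{\partial}{\partial\xi^{j_1}}-x_{j_1}\frac{\partial}{\partial\xi^{i_1}}\Big)\cdots\Big(x_{i_{m+1}}\frac{\partial}{\partial\xi^{j_{m+1}}}-x_{j_{m+1}}\frac{\partial}{\partial\xi^{i_{m+1}}}\Big)\psi=0$$ on $V_n$.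
   Context: $T\mathbb{S}^{n-1}=\{(x,\xi):|\xi|=1,\ \langle x,\xi\rangle=0\}$ and $\mathbb{S}^{n-1}_0=\{(0,\xi):\xi\in\mathbb{S}^{n-1}\}\subset T\mathbb{S}^{n-1}$. Let $$V_n=\{(x,\xi)\in\mathbb{R}^n\times\mathbb{R}^n: x\ne0,\ \xi\ne0,\ \langle x,\xi\rangle=0\},$$ a smooth hypersurface of $(\mathbb{R}^n\setminus\{0\})^2$. The vector fields $x_i\partial/\partial\xi^j-x_j\partial/\partial\xi^i$ are tangent to $V_n$, hence act on $C^\infty(V_n)$. On $\mathbb{R}^n\times\mathbb{R}^n$ define (summation over $p$) $$\tilde\Xi_i=\partial/\partial\xi^i-x_i\xi^p\,\partial/\partial x^p-\xi_i\xi^p\,\partial/\partial\xi^p.$$ This field is tangent to $T\mathbb{S}^{n-1}$; $\Xi_i$ denotes its restriction to $T\mathbb{S}^{n-1}\setminus\mathbb{S}^{n-1}_0$. Here $x_i=x^i$ and $\xi_i=\xi^i$ act by multiplication. *)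

(* Defs.v *)
From HB Require Import structures.
From mathcomp Require Import all_boot all_order all_algebra.
From mathcomp Require Import all_classical all_reals all_analysis.
Set Implicit Arguments. Unset Strict Implicit. Unset Printing Implicit Defensive.
Import Order.TTheory GRing.Theory Num.Theory.
Import numFieldNormedType.Exports.
Local Open Scope classical_set_scope.
Local Open Scope ring_scope.

Section Defs.
Variables (R : realType) (n : nat).

Definition pt := ('rV[R]_n * 'rV[R]_n)%type.

Definition dot (x y : 'rV[R]_n) : R := \sum_(i < n) x 0 i * y 0 i.
Definition enorm (x : 'rV[R]_n) : R := Num.sqrt (dot x x).

Definition TS_punct : set pt :=
  [set p | enorm p.2 = 1 /\ dot p.1 p.2 = 0 /\ p.1 != 0].

Definition Vn : set pt :=
  [set p | p.1 != 0 /\ p.2 != 0 /\ dot p.1 p.2 = 0].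

Definition dx (j : 'I_n) (f : pt -> R) : pt -> R :=
  fun p => 'D_((delta_mx 0 j : 'rV[R]_n, 0 : 'rV[R]_n) : pt) f p.
Definition dxi (j : 'I_n) (f : pt -> R) : pt -> R :=
  fun p => 'D_((0 : 'rV[R]_n, delta_mx 0 j : 'rV[R]_n) : pt) f p.

Fixpoint iter_D (vs : seq pt) (f : pt -> R) : pt -> R :=
  match vs with
  | [::] => f
  | v :: vs' => fun p => 'D_v (iter_D vs' f) p
  end.
Definition smooth_on (U : set pt) (f : pt -> R) : Prop :=
  forall (vs : seq pt) (p : pt), U p -> differentiable (iter_D vs f) p.

Definition Xi (i : 'I_n) (f : pt -> R) : pt -> R :=
  fun p => dxi i f p
    - p.1 0 i * (\sum_(q < n) p.2 0 q * dx q f p)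
    - p.2 0 i * (\sum_(q < n) p.2 0 q * dxi q f p).

(* E_k (k 1-based, here k = k0.+1 with k0 : 'I_(m.+1)) *)
Definition Eop (m : nat) (ii jj : 'I_m.+1 -> 'I_n) (k0 : 'I_m.+1)
    (f : pt -> R) : pt -> R :=
  fun p => p.1 0 (ii k0) * Xi (jj k0) f p - p.1 0 (jj k0) * Xi (ii k0) f p
    + (m - k0)%:R * (p.1 0 (ii k0) * p.2 0 (jj k0)
                     - p.1 0 (jj k0) * p.2 0 (ii k0)) * f p.

(* E_N ... E_1 f  (E_1 applied first) *)
Fixpoint iterE (m : nat) (ii jj : 'I_m.+1 -> 'I_n) (N : nat) (f : pt -> R)
  : pt -> R :=
  match N with
  | 0 => f
  | N'.+1 => Eop ii jj (inord N') (iterE ii jj N' f)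
  end.

Definition Lop (m : nat) (ii jj : 'I_m.+1 -> 'I_n) (k0 : 'I_m.+1)
    (f : pt -> R) : pt -> R :=
  fun p => p.1 0 (ii k0) * dxi (jj k0) f p - p.1 0 (jj k0) * dxi (ii k0) f p.

(* L_{m+2-N} ... L_{m+1} f  (L_{m+1} applied first, L_1 last when N = m+1) *)
Fixpoint iterL (m : nat) (ii jj : 'I_m.+1 -> 'I_n) (N : nat) (f : pt -> R)
  : pt -> R :=
  match N with
  | 0 => f
  | N'.+1 => Lop ii jj (inord (m - N')) (iterL ii jj N' f)
  end.

Definition psi_of (m : nat) (phi : pt -> R) : pt -> R :=
  fun p => enorm p.2 ^+ m * phi (p.1, (enorm p.2)^-1 *: p.2).

End Defs.

(* Main.v *)
Require Import Defs.
From HB Require Import structures.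
From mathcomp Require Import all_boot all_order all_algebra.
From mathcomp Require Import all_classical all_reals all_analysis.
From mathcomp Require Import ring lra.
Set Implicit Arguments. Unset Strict Implicit. Unset Printing Implicit Defensive.
Import Order.TTheory GRing.Theory Num.Theory.
Import numFieldNormedType.Exports.
Local Open Scope classical_set_scope.
Local Open Scope ring_scope.
Section A.
Context {R : realType} {V W : normedModType R}.

Lemma near_eq_differentiable (f g : V -> W) (a : V) :
  (\forall x \near a, f x = g x) -> differentiable f a -> differentiable g a.
Proof.
move=> fg df.
have h0 : (fun x => g x - f x) \o shift a =o_ (0:V) id.
  apply/eqoP => e e0.
  have : \forall x \near (0:V), f (x + a) = g (x + a).
    rewrite (near_shift a) /=. by apply: filterS fg => z /= h; rewrite /comp add0r subrK.
  apply: filterS => x /= ->. by rewrite subrr normr0 mulr_ge0 // ltW.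
set k := (fun x => g x - f x) in h0.
have ka : k a = 0 by rewrite /k (nbhs_singleton fg) subrr.
have ga : g a = f a by rewrite (nbhs_singleton fg).
have ek : g \o shift a = cst (g a) + 'd f a +o_ (0:V) id.
  have -> : g \o shift a = (f \o shift a) + (k \o shift a).
    apply/funext => x; change (g (x+a) = f (x+a) + (g (x+a) - f (x+a))); by rewrite [RHS]addrC subrK.
  rewrite ga (diff_locally df) h0 -addrA addo. done.
have dg : 'd g a = 'd f a :> (V -> W).
  apply: diff_unique => //; exact: diff_continuous.
apply: (proj2 (diff_locallyP _ _)); rewrite dg; split => //; exact: diff_continuous.
Qed.
End A.

Section Main.
Variables (R : realType) (n : nat).
Local Notation pt := (pt R n).

Lemma open_near (U : set pt) p : open U -> U p -> \forall q \near p, U q.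
Proof. by move=> oU Up; apply: open_nbhs_nbhs; split. Qed.

Lemma iter_D_loc (U : set pt) (f g : pt -> R) : open U ->
  (forall q, U q -> f q = g q) -> forall vs p, U p -> iter_D vs f p = iter_D vs g p.
Proof.
move=> oU fg; elim=> [|v vs IH] p Up /=; first exact: fg.
apply: near_eq_derive; near=> q; apply: IH; near: q; exact: open_near.
Unshelve. all: by end_near. Qed.

Lemma iter_D_rcons vs v (f : pt -> R) :
  iter_D (rcons vs v) f = iter_D vs (fun p => 'D_v f p).
Proof. by elim: vs => [|w vs IH] //=; rewrite IH. Qed.

Definition smk (U : set pt) k (f : pt -> R) := forall w : seq pt, (size w <= k)%N ->
  forall p, U p -> differentiable (iter_D w f) p.
Definition sm U f := forall k, smk U k f.

Lemma sm_smooth U f : sm U f <-> smooth_on U f.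
Proof.
split=> [h w p Up|h k w _ p Up]; last exact: h.
exact: (h (size w)).
Qed.

Lemma smk_loc U k f g : open U -> (forall q, U q -> f q = g q) -> smk U k f -> smk U k g.
Proof.
move=> oU fg hf w hw p Up; apply: near_eq_differentiable (hf w hw p Up).
near=> q; apply: (iter_D_loc oU fg); near: q; exact: open_near.
Unshelve. all: by end_near. Qed.

Lemma smk_add U k f g : open U -> smk U k f -> smk U k g ->
  smk U k (fun p => f p + g p).
Proof.
move=> oU hf hg.
have E : forall w, (size w <= k)%N -> forall p, U p ->
    iter_D w (fun p => f p + g p) p = iter_D w f p + iter_D w g p.
  elim=> [|v w IH] hw p Up //=.
  have hw' : (size w <= k)%N by apply: leq_trans hw.
  rewrite (@near_eq_derive _ _ _ _ (fun q => iter_D w f q + iter_D w g q)).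
    by apply: deriveD; apply: diff_derivable; [exact: (hf w hw' p Up)|exact: (hg w hw' p Up)].
  near=> q; apply: IH => //; near: q; exact: open_near.
move=> w hw p Up; apply: (@near_eq_differentiable _ _ _ (fun q => iter_D w f q + iter_D w g q)).
  near=> q; rewrite E //; near: q; exact: open_near.
apply: differentiableD; [exact: hf|exact: hg].
Unshelve. all: by end_near. Qed.

Lemma smk_le U k k' f : (k' <= k)%N -> smk U k f -> smk U k' f.
Proof. by move=> hk h w hw; apply: h; apply: leq_trans hk. Qed.

Lemma sm_D U v f : sm U f -> sm U (fun p => 'D_v f p).
Proof.
move=> h k w hw p Up; rewrite -iter_D_rcons; apply: (h k.+1) => //.
by rewrite size_rcons.
Qed.

Lemma sm_mul U f g : open U -> sm U f -> sm U g -> sm U (fun p => f p * g p).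
Proof.
move=> oU hf hg k; elim: k f g hf hg => [|k IH] f g hf hg.
  case=> [|//] _ p Up /=; exact: differentiableM (hf 0%N [::] isT p Up) (hg 0%N [::] isT p Up).
move=> w; rewrite leq_eqVlt ltnS => /orP[/eqP hw|hw]; last first.
  by apply: IH.
case/lastP: w hw => [//|w v]; rewrite size_rcons => /eqP; rewrite eqSS => /eqP hw p Up.
rewrite iter_D_rcons.
have : smk U k (fun q => f q * 'D_v g q + g q * 'D_v f q).
  apply: smk_add => //; apply: IH => //; exact: sm_D.
move/(@smk_loc _ _ _ (fun q => 'D_v (fun x => f x * g x) q) oU).
apply.
  move=> q Uq; rewrite (deriveM (f:=f) (g:=g)) //; apply: diff_derivable.
    exact: (hf 0%N [::]).
  exact: (hg 0%N [::]).
by rewrite hw.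
exact: Up.
Qed.


Lemma lin_diff (f : pt -> R) :
  (forall a x y, f (a *: x + y) = a * f x + f y) -> continuous f ->
  forall p, differentiable f p /\ forall v, 'D_v f p = f v.
Proof.
move=> flin fc p.
pose fM := GRing.isLinear.Build R pt R *:%R f flin.
pose fL : {linear pt -> R} := HB.pack f fM.
have -> : f = fL by [].
split; first exact: linear_differentiable.
by move=> v; rewrite deriveE ?diff_lin //; exact: linear_differentiable.
Qed.

Lemma coordX_cont i : continuous (fun p : pt => p.1 0 i).
Proof.
move=> p; apply: (@continuous_comp _ _ _ fst (fun M : 'rV[R]_n => M 0 i)); [exact: cvg_fst|exact: coord_continuous].
Qed.
Lemma coordY_cont i : continuous (fun p : pt => p.2 0 i).
Proof.
move=> p; apply: (@continuous_comp _ _ _ snd (fun M : 'rV[R]_n => M 0 i)); [exact: cvg_snd|exact: coord_continuous].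
Qed.

Lemma coordX_diff i : forall p : pt, differentiable (fun p : pt => p.1 0 i) p /\
  forall v, 'D_v (fun p : pt => p.1 0 i) p = v.1 0 i.
Proof.
apply: lin_diff; last exact: coordX_cont.
by move=> a x y /=; rewrite !mxE.
Qed.
Lemma coordY_diff i : forall p : pt, differentiable (fun p : pt => p.2 0 i) p /\
  forall v, 'D_v (fun p : pt => p.2 0 i) p = v.2 0 i.
Proof.
apply: lin_diff; last exact: coordY_cont.
by move=> a x y /=; rewrite !mxE.
Qed.


Lemma sm_ext U (f g : pt -> R) : (forall p, f p = g p) -> sm U f -> sm U g.
Proof. by move=> fg; have -> : f = g by apply/funext. Qed.

Lemma iterD_cst w (c : R) : exists c', iter_D w (fun _ : pt => c) = fun _ => c'.
Proof.
elim: w => [|v w [c' IH]] /=; first by exists c.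
exists 0; rewrite IH; apply/funext => p; exact: derive_cst.
Qed.

Lemma sm_cst U c : sm U (fun _ => c).
Proof.
move=> k w _ p _; have [c' ->] := iterD_cst w c; exact: differentiable_cst.
Qed.

Lemma sm_X U i : sm U (fun p : pt => p.1 0 i).
Proof.
have E : forall w, iter_D w (fun p : pt => p.1 0 i) = (fun p : pt => p.1 0 i) \/
   exists c, iter_D w (fun p : pt => p.1 0 i) = fun _ => c.
  elim=> [|v w [IH|[c IH]]] /=; first by left.
    by right; exists (v.1 0 i); rewrite IH; apply/funext => p; rewrite (coordX_diff i p).2.
  by right; exists 0; rewrite IH; apply/funext => p; exact: derive_cst.
move=> k w _ p _; have [->|[c ->]] := E w; first exact: (coordX_diff i p).1.
exact: differentiable_cst.
Qed.

Lemma sm_Y U i : sm U (fun p : pt => p.2 0 i).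
Proof.
have E : forall w, iter_D w (fun p : pt => p.2 0 i) = (fun p : pt => p.2 0 i) \/
   exists c, iter_D w (fun p : pt => p.2 0 i) = fun _ => c.
  elim=> [|v w [IH|[c IH]]] /=; first by left.
    by right; exists (v.2 0 i); rewrite IH; apply/funext => p; rewrite (coordY_diff i p).2.
  by right; exists 0; rewrite IH; apply/funext => p; exact: derive_cst.
move=> k w _ p _; have [->|[c ->]] := E w; first exact: (coordY_diff i p).1.
exact: differentiable_cst.
Qed.

Lemma sm_add' U f g : open U -> sm U f -> sm U g -> sm U (fun p => f p + g p).
Proof. by move=> oU hf hg k; apply: smk_add. Qed.

Lemma sm_sub U f g : open U -> sm U f -> sm U g -> sm U (fun p => f p - g p).
Proof.
move=> oU hf hg; apply: (@sm_ext _ (fun p => f p + (-1) * g p)).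
  by move=> p; rewrite mulN1r.
by apply: sm_add' => //; apply: sm_mul => //; exact: sm_cst.
Qed.

Lemma sm_sum U (I : Type) (r : seq I) (F : I -> pt -> R) : open U ->
  (forall l, sm U (F l)) -> sm U (fun p => \sum_(l <- r) F l p).
Proof.
move=> oU hF; elim: r => [|a r IH].
  by apply: (sm_ext (f := fun _ => 0)) => [p|]; [rewrite big_nil|exact: sm_cst].
apply: (sm_ext (f := fun p => F a p + \sum_(l <- r) F l p)).
  by move=> p; rewrite big_cons.
exact: sm_add'.
Qed.

Lemma sm_Xi U i f : open U -> sm U f -> sm U (Xi i f).
Proof.
move=> oU hf; rewrite /Xi.
apply: sm_sub => //; [apply: sm_sub => //; [exact: sm_D|]|];
 apply: sm_mul => //; try exact: sm_X; try exact: sm_Y;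
 apply: sm_sum => // l; apply: sm_mul => //; try exact: sm_Y; exact: sm_D.
Qed.

Lemma sm_Eop U m (ii jj : 'I_m.+1 -> 'I_n) k0 f : open U -> sm U f -> sm U (Eop ii jj k0 f).
Proof.
move=> oU hf; rewrite /Eop.
apply: sm_add' => //; first (apply: sm_sub => //; apply: sm_mul => //;
  solve [exact: sm_X | exact: sm_Xi]).
apply: sm_mul => //; apply: sm_mul => //; first exact: sm_cst.
apply: sm_sub => //; apply: sm_mul => //; solve [exact: sm_X | exact: sm_Y].
Qed.

Lemma sm_iterE U m (ii jj : 'I_m.+1 -> 'I_n) N f : open U -> sm U f -> sm U (iterE ii jj N f).
Proof. by move=> oU hf; elim: N => [|N IH] //=; apply: sm_Eop. Qed.


Definition hasD (f : pt -> R) p (D : pt -> R) :=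
  differentiable f p /\ forall v, 'D_v f p = D v.

Lemma hasD_cst c p : hasD (fun _ => c) p (fun _ => 0).
Proof. by split; [exact: differentiable_cst|move=> v; exact: derive_cst]. Qed.

Lemma hasD_X i p : hasD (fun p : pt => p.1 0 i) p (fun v => v.1 0 i).
Proof. exact: coordX_diff. Qed.
Lemma hasD_Y i p : hasD (fun p : pt => p.2 0 i) p (fun v => v.2 0 i).
Proof. exact: coordY_diff. Qed.

Lemma hasD_add f g p Df Dg : hasD f p Df -> hasD g p Dg ->
  hasD (fun x => f x + g x) p (fun v => Df v + Dg v).
Proof.
move=> [df Ef] [dg Eg]; split; first exact: differentiableD.
move=> v; rewrite -Ef -Eg; apply: (@deriveD _ _ _ f g); exact: diff_derivable.
Qed.

Lemma hasD_mul f g p Df Dg : hasD f p Df -> hasD g p Dg ->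
  hasD (fun x => f x * g x) p (fun v => f p * Dg v + g p * Df v).
Proof.
move=> [df Ef] [dg Eg]; split; first exact: differentiableM.
move=> v; rewrite -Ef -Eg; apply: (@deriveM _ _ f g); exact: diff_derivable.
Qed.

Lemma hasD_inv f p Df : hasD f p Df -> f p != 0 ->
  hasD (fun x => (f x)^-1) p (fun v => - (f p) ^- 2 * Df v).
Proof.
move=> [df Ef] f0; split; first exact: differentiableV.
move=> v; rewrite -Ef; apply: (@deriveV _ _ f) => //; exact: diff_derivable.
Qed.

Lemma hasD_sum (F : 'I_n -> pt -> R) p DF : (forall l, hasD (F l) p (DF l)) ->
  hasD (fun x => \sum_(l < n) F l x) p (fun v => \sum_(l < n) DF l v).
Proof.
move=> h; have -> : (fun x => \sum_(l < n) F l x) = \sum_(l < n) F l by rewrite fct_sumE.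
split; first by apply: differentiable_sum => l; exact: (h l).1.
move=> v; rewrite derive_sum; last by move=> l; apply: diff_derivable; exact: (h l).1.
by apply: eq_bigr => l _; rewrite (h l).2.
Qed.

Lemma hasD_sqrt f p Df : hasD f p Df -> 0 < f p ->
  hasD (fun x => Num.sqrt (f x)) p (fun v => Df v / (2 * Num.sqrt (f p))).
Proof.
move=> [df Ef] f0.
have ds : differentiable (@Num.sqrt R) (f p).
  apply/derivable1_diffP; have := is_derive1_sqrt f0; by case.
have -> : (fun x => Num.sqrt (f x)) = (@Num.sqrt R) \o f by [].
split; first exact: differentiable_comp.
move=> v; rewrite deriveE; last exact: differentiable_comp.
rewrite diff_comp //= deriv1E; last exact/derivable1_diffP.
by rewrite derive1E derive_sqrt // -deriveE // Ef.
Qed.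


Lemma dot_gt0 (x : 'rV[R]_n) : x != 0 -> 0 < dot x x.
Proof.
move=> x0; case: (boolP [exists l, x 0 l != 0]) => [/existsP[l hl]|/existsPn h]; last first.
  by case/eqP: x0; apply/rowP => l; rewrite mxE; apply/eqP; move: (h l); rewrite negbK.
rewrite /dot (bigD1 l) //=; apply: (@lt_le_trans _ _ (x 0 l * x 0 l)).
  by rewrite -expr2 exprn_even_gt0.
rewrite lerDl; apply: sumr_ge0 => i _; rewrite -expr2; exact: sqr_ge0.
Qed.

Lemma enorm_gt0 (x : 'rV[R]_n) : x != 0 -> 0 < enorm x.
Proof. by move=> x0; rewrite /enorm sqrtr_gt0; exact: dot_gt0. Qed.

Definition nrm (p : pt) := enorm p.2.
Definition Phi (p : pt) : pt := (p.1, (enorm p.2)^-1 *: p.2).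
Definition cc l (p : pt) := (enorm p.2)^-1 * p.2 0 l.
Definition ex (l : 'I_n) : pt := (delta_mx 0 l, 0).
Definition exi (l : 'I_n) : pt := (0, delta_mx 0 l).
Definition DN (p v : pt) := (\sum_(l < n) (p.2 0 l * v.2 0 l + p.2 0 l * v.2 0 l)) / (2 * nrm p).
Definition Dc l (p v : pt) := - (nrm p) ^- 2 * DN p v * p.2 0 l + (nrm p)^-1 * v.2 0 l.

Lemma hasD_nrm p : p.2 != 0 -> hasD nrm p (DN p).
Proof.
move=> p0; rewrite /nrm /enorm /DN.
apply: hasD_sqrt; last exact: dot_gt0.
rewrite /dot; apply: hasD_sum => l.
have := hasD_mul (hasD_Y l p) (hasD_Y l p).
by [].
Qed.

Lemma hasD_cc l p : p.2 != 0 -> hasD (cc l) p (Dc l p).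
Proof.
move=> p0; rewrite /cc /Dc.
have h1 := hasD_inv (hasD_nrm p0) (lt0r_neq0 (enorm_gt0 p0)).
have := hasD_mul h1 (hasD_Y l p).
case=> d E; split => // v; rewrite E; rewrite /nrm. 
by rewrite addrC mulrC.
Qed.


Lemma sum_fst (F : 'I_n -> pt) : (\sum_(l < n) F l).1 = \sum_(l < n) (F l).1.
Proof. by elim/big_rec2: _ => // i y1 y2 _ <-. Qed.
Lemma sum_snd (F : 'I_n -> pt) : (\sum_(l < n) F l).2 = \sum_(l < n) (F l).2.
Proof. by elim/big_rec2: _ => // i y1 y2 _ <-. Qed.

Lemma Phi_repr p : Phi p =
  \sum_(l < n) (p.1 0 l *: ex l) + \sum_(l < n) (cc l p *: exi l).
Proof.
apply/pair_equal_spec; split => /=.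
  rewrite sum_fst sum_fst /= [X in _ + X]big1 ?addr0; last first.
    by move=> l _; apply/rowP => j; rewrite !mxE mulr0.
  exact: row_sum_delta.
rewrite sum_snd sum_snd /= [X in X + _]big1 ?add0r; last first.
  by move=> l _; apply/rowP => j; rewrite !mxE mulr0.
rewrite [X in _ *: X]row_sum_delta scaler_sumr; apply: eq_bigr => l _.
by rewrite scalerA.
Qed.

Lemma hasDZ f p Df (w : pt) : hasD f p Df ->
  differentiable (fun x => f x *: w) p /\ forall v, 'D_v (fun x => f x *: w) p = Df v *: w.
Proof.
move=> [df Ef]; split; first exact: differentiableZl.
move=> v; rewrite deriveE; last exact: differentiableZl.
by rewrite diffZl // -deriveE // Ef.
Qed.

Lemma Phi_D p : p.2 != 0 -> differentiable Phi p /\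
  forall v, 'D_v Phi p = \sum_(l < n) (v.1 0 l *: ex l) + \sum_(l < n) (Dc l p v *: exi l).
Proof.
move=> p0.
pose F1 : 'I_n -> pt -> pt := fun l x => x.1 0 l *: ex l.
pose F2 : 'I_n -> pt -> pt := fun l x => cc l x *: exi l.
have -> : Phi = \sum_(l < n) F1 l + \sum_(l < n) F2 l.
  by apply/funext => x; rewrite Phi_repr !fct_sumE.
have d1 : differentiable (\sum_(l < n) F1 l) p.
  by apply: differentiable_sum => l; exact: (hasDZ (ex l) (hasD_X l p)).1.
have d2 : differentiable (\sum_(l < n) F2 l) p.
  by apply: differentiable_sum => l; exact: (hasDZ (exi l) (hasD_cc l p0)).1.
split; first exact: differentiableD.
move=> v; rewrite deriveD; try exact: diff_derivable.
rewrite !derive_sum.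
- congr (_ + _); apply: eq_bigr => l _.
    exact: (hasDZ (ex l) (hasD_X l p)).2.
  exact: (hasDZ (exi l) (hasD_cc l p0)).2.
all: by move=> l; apply: diff_derivable;
  first [exact: (hasDZ (ex l) (hasD_X l p)).1 | exact: (hasDZ (exi l) (hasD_cc l p0)).1].
Qed.


Lemma hasD_gPhi (g : pt -> R) p : p.2 != 0 -> differentiable g (Phi p) ->
  hasD (fun x => g (Phi x)) p (fun v => \sum_(l < n) v.1 0 l * dx l g (Phi p)
     + \sum_(l < n) Dc l p v * dxi l g (Phi p)).
Proof.
move=> p0 dg; have [dP EP] := Phi_D p0.
have -> : (fun x => g (Phi x)) = g \o Phi by [].
split; first exact: differentiable_comp.
move=> v; rewrite deriveE; last exact: differentiable_comp.
rewrite diff_comp //= -(deriveE v dP) EP linearD !linear_sum /=.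
by congr (_ + _); apply: eq_bigr => l _; rewrite linearZ /= -deriveE.
Qed.

Lemma hasD_pow f p Df d : hasD f p Df ->
  hasD (fun x => f x ^+ d) p (fun v => d%:R * f p ^+ d.-1 * Df v).
Proof.
move=> [df Ef]; have -> : (fun x => f x ^+ d) = f ^+ d by rewrite exprfctE.
split; first by case: d => [|d]; [rewrite expr0; exact: differentiable_cst|exact: differentiableX].
move=> v; rewrite -Ef; apply: (@deriveX _ _ f); exact: diff_derivable.
Qed.

Lemma sum_delta (F : 'I_n -> R) b :
  \sum_(l < n) F l * (delta_mx 0 b : 'rV[R]_n) 0 l = F b.
Proof.
rewrite (bigD1 b) //= mxE !eqxx mulr1 big1 ?addr0 // => l hl.
by rewrite mxE (negbTE hl) andbF mulr0.
Qed.

Definition Ext d (g : pt -> R) (p : pt) := nrm p ^+ d * g (Phi p).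

Lemma key d g p b : p.2 != 0 -> differentiable g (Phi p) ->
  dxi b (Ext d g) p = nrm p ^+ d / nrm p * (d%:R * (Phi p).2 0 b * g (Phi p)
    + dxi b g (Phi p) - (Phi p).2 0 b * \sum_(l < n) (Phi p).2 0 l * dxi l g (Phi p)).
Proof.
move=> p0 dg.
have N0 : nrm p != 0 by rewrite lt0r_neq0 // enorm_gt0.
have [_ E] := hasD_mul (hasD_pow d (hasD_nrm p0)) (hasD_gPhi p0 dg).
rewrite /dxi /Ext E /=.
set q := Phi p.
have E1 : \sum_(l < n) (0 : 'rV[R]_n) 0 l * dx l g q = 0.
  by rewrite big1 // => l _; rewrite mxE mul0r.
have E2 : DN p (0, delta_mx 0 b) = p.2 0 b / nrm p.
  rewrite /DN /=. 
  have -> : \sum_(l < n) (p.2 0 l * (delta_mx 0 b : 'rV[R]_n) 0 l + p.2 0 l * (delta_mx 0 b : 'rV[R]_n) 0 l)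
     = p.2 0 b + p.2 0 b.
    by rewrite big_split /= !sum_delta.
  by field; rewrite N0.
rewrite E1 add0r E2.
set S := \sum_(l < n) p.2 0 l * dxi l g q.
have E3 : \sum_(l < n) Dc l p (0, delta_mx 0 b) * dxi l g q =
    (nrm p)^-1 * dxi b g q - (nrm p)^-1 ^+ 3 * p.2 0 b * S.
  rewrite (eq_bigr (fun l => (- (nrm p)^-1 ^+ 3 * p.2 0 b) * (p.2 0 l * dxi l g q)
       + ((nrm p)^-1 * dxi l g q) * (delta_mx 0 b : 'rV[R]_n) 0 l)); last first.
    move=> l _; rewrite /Dc E2 /=; field; exact: N0.
  rewrite big_split /= sum_delta -mulr_sumr /S; ring.
rewrite E3.
have E4 : \sum_(l < n) ((enorm p.2)^-1 *: p.2) 0 l * 'D_(0, delta_mx 0 l) g q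
    = (nrm p)^-1 * S.
  rewrite /S mulr_sumr; apply: eq_bigr => l _; rewrite mxE mulrA //.
rewrite E4 mxE -/(nrm p).
clear E; case: d => [|d] /=.
  rewrite expr0 !mul0r mulr0 !add0r; rewrite /dxi; field; exact: N0.
rewrite exprS /dxi; field; exact: N0.
Qed.


Lemma keyL d g p a b : p.2 != 0 -> differentiable g (Phi p) ->
  p.1 0 a * dxi b (Ext d g) p - p.1 0 b * dxi a (Ext d g) p =
  nrm p ^+ d / nrm p * ((Phi p).1 0 a * Xi b g (Phi p) - (Phi p).1 0 b * Xi a g (Phi p)
     + d%:R * ((Phi p).1 0 a * (Phi p).2 0 b - (Phi p).1 0 b * (Phi p).2 0 a) * g (Phi p)).
Proof.
move=> p0 dg; rewrite !key // /Xi /=.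
set S := \sum_(l < n) _ * dxi l g _.
set T := \sum_(l < n) _ * dx l g _.
ring.
Qed.

Lemma dotZ c (x y : 'rV[R]_n) : dot x (c *: y) = c * dot x y.
Proof. by rewrite /dot mulr_sumr; apply: eq_bigr => l _; rewrite mxE mulrCA. Qed.
Lemma dotZl c (x y : 'rV[R]_n) : dot (c *: x) y = c * dot x y.
Proof. by rewrite /dot mulr_sumr; apply: eq_bigr => l _; rewrite mxE mulrA. Qed.

Lemma Phi_TS p : Vn p -> TS_punct (Phi p).
Proof.
move=> [x0 [p0 xp]]; have N0 := enorm_gt0 p0.
split; last split => //=; last by rewrite dotZ xp mulr0.
rewrite /enorm /= dotZ dotZl mulrA.
have -> : dot p.2 p.2 = enorm p.2 ^+ 2 by rewrite /enorm sqr_sqrtr // ltW // dot_gt0.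
by rewrite -expr2 -exprMn mulVf ?lt0r_neq0 // expr1n sqrtr1.
Qed.

Lemma W_near (U : set pt) p : open U -> p.2 != 0 -> U (Phi p) ->
  \forall q \near p, q.2 != 0 /\ U (Phi q).
Proof.
move=> oU p0 Up.
have c1 := differentiable_continuous (hasD_nrm p0).1.
have c2 := differentiable_continuous (Phi_D p0).1.
have h1 : \forall q \near p, nrm q != 0.
  by apply: cvgr_neq0 c1 _; rewrite lt0r_neq0 // enorm_gt0.
have h2 : \forall q \near p, U (Phi q) by exact: c2 _ (open_near oU Up).
near=> q; split; last by near: q.
have : nrm q != 0 by near: q.
by apply: contra => /eqP q0; rewrite /nrm /enorm q0 /dot big1 ?sqrtr0 // => l _; rewrite mxE mul0r.
Unshelve. all: by end_near. Qed.

End Main.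

Theorem lemma4p2 (R : realType) (n m : nat) (U : set (pt R n))
    (phi : pt R n -> R) :
  open U -> TS_punct (R:=R) (n:=n) `<=` U -> smooth_on U phi ->
  (forall (ii jj : 'I_m.+1 -> 'I_n) (p : pt R n),
      TS_punct p -> iterE ii jj m.+1 phi p = 0) ->
  forall (ii jj : 'I_m.+1 -> 'I_n) (p : pt R n),
    Vn p -> iterL ii jj m.+1 (psi_of m phi) p = 0.
Proof.
move=> oU TSU sphi hE ii jj p Vp.
have smphi : sm U phi by apply/sm_smooth.
pose ii' := fun k : 'I_m.+1 => ii (inord (m - k)).
pose jj' := fun k : 'I_m.+1 => jj (inord (m - k)).
pose G k := iterE ii' jj' k phi.
have dG : forall k q, U q -> differentiable (G k) q.
  move=> k q Uq; exact: (@sm_iterE _ _ _ _ ii' jj' k _ oU smphi 0%N [::] isT q Uq).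
have step : forall k, (k <= m)%N ->
    (forall q, q.2 != 0 -> U (Phi q) -> iterL ii jj k (psi_of m phi) q = Ext (m - k) (G k) q) ->
    forall q, q.2 != 0 -> U (Phi q) ->
    iterL ii jj k.+1 (psi_of m phi) q = nrm q ^+ (m - k) / nrm q * G k.+1 (Phi q).
  move=> k km IH q q0 Uq /=.
  have E : forall j, dxi j (iterL ii jj k (psi_of m phi)) q = dxi j (Ext (m - k) (G k)) q.
    move=> j; apply: near_eq_derive; have := W_near oU q0 Uq.
    by apply: filterS => r [r0 Ur]; exact: IH.
  rewrite /Lop !E keyL //; last exact: dG.
  congr (_ * _); rewrite /G /= /Eop /ii' /jj' !inordK //; exact: leq_ltn_trans km _.
have claim : forall k, (k <= m)%N -> forall q, q.2 != 0 -> U (Phi q) ->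
    iterL ii jj k (psi_of m phi) q = Ext (m - k) (G k) q.
  elim=> [|k IH] hk q q0 Uq; first by rewrite subn0.
  rewrite step //; [|exact: ltnW|exact: IH (ltnW hk)].
  have N0 : nrm q != 0 by rewrite lt0r_neq0 // enorm_gt0.
  rewrite /Ext -(subnSK hk) exprS; field; exact: N0.
have [x0 [p0 _]] := Vp.
have UP : U (Phi p) by apply: TSU; exact: Phi_TS.
rewrite (step m) // ?claim //.
by rewrite /G hE ?mulr0 //; exact: Phi_TS.
exact: claim.
Qed.
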